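(* Let $G=(V,E)$ be a finite simple connected graph with $n$ vertices, $\omega\colon V\to(0,\infty)$ a weight function with $\omega=\omega(V)$, $\delta>0$, and $s=\frac{8\ln n}{\delta^2}$. Let $S=\{m_1,\dots,m_s\}$ be a random multiset of $s$ vertices drawn independently with $\Pr(m_i=v)=\omega(v)/\omega$. Then for any vertex $v$, with probability at least $1-n^{-3}$, \[\frac{\Lambda(v)}{\omega}\le\frac{\Lambda^{*}(v)}{s}+\frac{\delta}{2}.\]
   Context: For vertices $q,v$, a vertex $u$ is consistent with $(q,v)$ if $q=v=u$, or $q\ne v$ and $v$ lies on a shortest path between $u$ and $q$; $N(q,v)$ is the set of such $u$. $N(v)$ is the neighbor set of $v$. $\omega(X)=\sum_{u\in X}\omega(u)$. $\Lambda(v)=\max_{u\in N(v)}\omega(N(v,u))$ and $\Lambda^{*}(v)=\max_{u\in N(v)}|S\cap N(v,u)|$, where $S\cap X$ is the multiset $\{m_i: m_i\in X\}$ (counted with multiplicity). *)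

(* Defs.v *)
From HB Require Import structures.
From mathcomp Require Import all_boot all_order all_algebra.
From mathcomp Require Import boolp reals exp.
Set Implicit Arguments. Unset Strict Implicit. Unset Printing Implicit Defensive.
Import Order.TTheory GRing.Theory Num.Theory.
Local Open Scope ring_scope.

Definition simple_graph (T : finType) (e : rel T) : Prop :=
  symmetric e /\ irreflexive e.

Definition connected_graph (T : finType) (e : rel T) : Prop :=
  forall u v : T, connect e u v.

Definition is_shortest_path (T : finType) (e : rel T) (u q : T) (p : seq T) : Prop :=
  [/\ path e u p, last u p = q &
      forall p' : seq T, path e u p' -> last u p' = q -> (size p <= size p')%N].

Definition on_shortest_path (T : finType) (e : rel T) (u q v : T) : Prop :=
  exists p : seq T, is_shortest_path e u q p /\ v \in u :: p.

Definition consistent (T : finType) (e : rel T) (q v u : T) : Prop :=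
  (q = v /\ v = u) \/ (q <> v /\ on_shortest_path e u q v).

Definition inN (T : finType) (e : rel T) (q v u : T) : bool :=
  `[< consistent e q v u >].

Definition weightN (R : realType) (T : finType) (e : rel T) (w : T -> R) (q v : T) : R :=
  \sum_(u | inN e q v u) w u.

(* Lambda(v) = max_{u in N(v)} omega(N(v,u)) (0 if v has no neighbour) *)
Definition Lambda (R : realType) (T : finType) (e : rel T) (w : T -> R) (v : T) : R :=
  \big[Order.max/0]_(u | e v u) weightN e w v u.

(* |S cap N(v,u)| counted with multiplicity, for S = (m_0, ..., m_{s-1}) *)
Definition countN (T : finType) (e : rel T) (s : nat) (m : {ffun 'I_s -> T}) (q v : T) : nat :=
  #|[set i : 'I_s | inN e q v (m i)]|.

Definition LambdaStar (T : finType) (e : rel T) (s : nat) (m : {ffun 'I_s -> T}) (v : T) : nat :=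
  \max_(u | e v u) countN e m v u.

(* Probability that s independent draws m_i with Pr(m_i = x) = w x / W satisfy
   the predicate P: sum of product weights over all outcomes satisfying P. *)
Definition sample_prob (R : realType) (T : finType) (w : T -> R) (s : nat)
  (P : {ffun 'I_s -> T} -> Prop) : R :=
  let W := \sum_(x : T) w x in
  \sum_(m : {ffun 'I_s -> T} | `[< P m >]) \prod_(i < s) (w (m i) / W).

(* Main.v *)
From HB Require Import structures.
From mathcomp Require Import all_boot all_order all_algebra.
From mathcomp Require Import boolp classical_sets reals topology normedtype derive realfun sequences exp.
From mathcomp Require Import ring lra.
Require Import Defs.
Import Order.TTheory GRing.Theory Num.Theory.
Import numFieldNormedType.Exports.
Local Open Scope ring_scope.

Section Calc.
Variable R : realType.

Lemma deriv_mono (f df : R -> R) (a b : R) : a <= b ->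
  (forall x : R, is_derive x (1:R) f (df x)) -> (forall x, a <= x <= b -> 0 <= df x) ->
  f a <= f b.
Proof.
move=> ab fd dpos.
have [|c cab E] := @MVT_segment R f df a b ab (fun x _ => fd x).
  apply/continuous_subspaceT=> r.
  apply/differentiable_continuous/derivable1_diffP.
  by have [] := fd r.
by rewrite -subr_ge0 E mulr_ge0 // ?subr_ge0 // dpos // -in_itv.
Qed.

Lemma pade (y : R) : 0 <= y -> expR y * (2 - y) <= 2 + y.
Proof.
move=> y0.
pose H := fun x : R => 2 + x - expR x * (2 - x).
have : H 0 <= H y.
  apply: (@deriv_mono H (fun x => 1 - expR x * (1 - x))) => //.
    move=> x; rewrite /H.
    apply: is_derive_eq.
    rewrite /GRing.scale /=. ring.
  move=> x /andP[x0 _].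
  have h1 := expR_ge1Dx (- x).
  have h2 := expRxMexpNx_1 x.
  have h3 := expR_gt0 x.
  nra.
rewrite /H expR0; lra.
Qed.

Lemma key_ineq (p x : R) : 0 <= p <= 1 -> 0 <= x ->
  p * (1 - p) * (1 - expR (- x)) <= (1 - p + p * expR (- x)) * (x / 4).
Proof.
move=> /andP[p0 p1] x0.
set r := expR (- (x / 2)).
have ra : expR (- x) = r * r by rewrite /r -expRD; congr expR; lra.
have r0 : 0 < r := expR_gt0 _.
have r1 : r <= 1 by rewrite /r expR_le1; lra.
have hp := @pade (x / 2) ltac:(lra).
have hr : expR (x / 2) * r = 1 by rewrite /r expRxMexpNx_1.
have h1 : 2 - x / 2 <= (2 + x / 2) * r.
  have := ler_wpM2r (ltW r0) hp. rewrite mulrAC hr mul1r. done.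
have h2 : 1 - r <= x * (1 + r) / 4 by lra.
rewrite ra.
have hpp : 0 <= p * (1 - p) by nra.
have h3 : p * (1 - p) * ((1 - r) * (1 + r)) <= p * (1 - p) * (x * (1 + r) / 4 * (1 + r)).
  apply: ler_wpM2l => //. apply: ler_wpM2r => //; lra.
have h4 : 0 <= (1 - p * (1 + r)) ^+ 2 by apply: sqr_ge0.
nra.
Qed.

Lemma hoeff (p l : R) : 0 <= p <= 1 -> 0 <= l ->
  1 - p + p * expR (- l) <= expR (l ^+ 2 / 8 - l * p).
Proof.
move=> /andP[p0 p1] l0.
pose G := fun x : R => - ((1 - p + p * expR (- x)) * expR (x * p - x ^+ 2 / 8)).
have : G 0 <= G l.
  apply: (@deriv_mono G (fun x => expR (x * p - x ^+ 2 / 8) *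
     (p * expR (- x) - (1 - p + p * expR (- x)) * (p - x / 4)))) => //.
    move=> x; rewrite /G.
    apply: is_derive_eq.
    rewrite /GRing.scale /=. by field.
  move=> x /andP[x0 _].
  apply: mulr_ge0; first exact: expR_ge0.
  have := @key_ineq p x ltac:(lra) x0.
  nra.
rewrite /G.
have E0 : 0 * p - (0:R) ^+ 2 / 8 = 0 by ring.
rewrite E0 oppr0 expR0 mulr1 => H.
have E1 : expR (l ^+ 2 / 8 - l * p) * expR (l * p - l ^+ 2 / 8) = 1.
  by rewrite -expRD -expR0; congr expR; ring.
have Ep := expR_gt0 (l ^+ 2 / 8 - l * p).
have Eq := expR_gt0 (l * p - l ^+ 2 / 8).
have H2 : (1 - p + p * expR (- l)) * expR (l * p - l ^+ 2 / 8) <= 1 by lra.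
have := ler_wpM2l (ltW Ep) H2.
rewrite mulr1 mulrCA E1 mulr1 //.
Qed.

Lemma chernoff (T : finType) (w : T -> R) (A : pred T) (s : nat) (t : R) (x0 : T) :
  (forall x, 0 < w x) -> 0 < t ->
  \sum_(m : {ffun 'I_s -> T} | (#|[set i | A (m i)]|%:R <
       s%:R * ((\sum_(x | A x) w x) / (\sum_x w x) - t)))
     \prod_(i < s) (w (m i) / \sum_x w x)
  <= expR (- (2 * s%:R * t ^+ 2)).
Proof.
move=> wpos t0.
set W := \sum_x w x. set p := (\sum_(x | A x) w x) / W.
have W0 : 0 < W.
  rewrite /W (bigD1 x0) //=.
  have := wpos x0.
  have : 0 <= \sum_(x | x != x0) w x by apply: sumr_ge0 => x _; apply/ltW/wpos.
  lra.
pose ind := fun x => if A x then 1 else 0 : R.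
pose l := 4 * t.
pose g := fun x => w x / W * expR (- (l * ind x)).
have Xe (m : {ffun 'I_s -> T}) : (#|[set i | A (m i)]|%:R : R) = \sum_i ind (m i).
  rewrite -sum1dep_card natr_sum big_mkcond /=.
  by apply: eq_bigr => i _; rewrite /ind; case: (A (m i)).
have wW x : 0 <= w x / W by apply: divr_ge0; [apply/ltW/wpos | apply/ltW].
have step1 : \sum_(m : {ffun 'I_s -> T} | (#|[set i | A (m i)]|%:R < s%:R * (p - t)))
     \prod_(i < s) (w (m i) / W) <= \sum_(m : {ffun 'I_s -> T}) expR (l * s%:R * (p - t)) * \prod_i g (m i).
  rewrite [X in X <= _]big_mkcond /=. apply: ler_sum => m _. case: ifP => H; last first.
    by apply: mulr_ge0; [apply: expR_ge0 | apply: prodr_ge0 => i _; apply: mulr_ge0 => //; apply: expR_ge0].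
  have EE : \prod_(i < s) (w (m i) / W * expR (- (l * ind (m i)))) =
      \prod_(i < s) (w (m i) / W) * expR (- (l * #|[set i | A (m i)]|%:R)).
    rewrite big_split /= -expR_sum Xe mulr_sumr -sumrN //.
  rewrite /g EE mulrCA -expRD.
  have P0 : 0 <= \prod_(i < s) (w (m i) / W) by apply: prodr_ge0 => i _.
  rewrite -[X in X <= _]mulr1 ler_wpM2l //.
  have lt0 : 0 < l by rewrite /l; lra.
  move: H; set X := (#|_|%:R : R) => H.
  have : 0 <= l * s%:R * (p - t) + - (l * X).
    have := ler_wpM2l (ltW lt0) (ltW H). nra.
  move=> h; have := expR_ge1Dx (l * s%:R * (p - t) + - (l * X)). lra.
have step2 : \sum_(m : {ffun 'I_s -> T}) expR (l * s%:R * (p - t)) * \prod_i g (m i)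
   = expR (l * s%:R * (p - t)) * (\sum_x g x) ^+ s.
  rewrite -big_distrr /=; congr (_ * _).
  rewrite -(bigA_distr_bigA (fun (i : 'I_s) (x : T) => g x)) /=.
  by rewrite prodr_const card_ord.
have SA : \sum_(x | ~~ A x) w x = W - \sum_(x | A x) w x.
  by rewrite /W [X in _ = X - _](bigID A) /=; ring.
have step3 : \sum_x g x = 1 - p + p * expR (- l).
  rewrite (bigID A) /=.
  have e1 : \sum_(x | A x) g x = p * expR (- l).
    rewrite /p !mulr_suml; apply: eq_bigr => x Ax.
    by rewrite /g /ind Ax mulr1.
  have e2 : \sum_(x | ~~ A x) g x = 1 - p.
    rewrite (eq_bigr (fun x => w x / W)); last first.
      by move=> x /negbTE nA; rewrite /g /ind nA mulr0 oppr0 expR0 mulr1.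
    rewrite -mulr_suml SA /p; field; lra.
  rewrite e1 e2; ring.
have p01 : 0 <= p <= 1.
  have s0 : 0 <= \sum_(x | A x) w x by apply: sumr_ge0 => x _; apply/ltW/wpos.
  have s1 : 0 <= \sum_(x | ~~ A x) w x by apply: sumr_ge0 => x _; apply/ltW/wpos.
  apply/andP; split; first by apply: divr_ge0 => //; apply/ltW.
  by rewrite /p ler_pdivrMr // mul1r; lra.
have l0 : 0 <= l by rewrite /l; lra.
have step4 : (1 - p + p * expR (- l)) ^+ s <= expR (l ^+ 2 / 8 - l * p) ^+ s.
  apply: lerXn2r; last exact: hoeff.
    rewrite nnegrE; have := expR_ge0 (- l); case/andP: p01; nra.
  by rewrite nnegrE expR_ge0.
apply: (le_trans step1); rewrite step2 step3.
apply: (le_trans (ler_wpM2l (expR_ge0 _) step4)).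
rewrite -expRM_natl -expRD /l.
have -> : 4 * t * s%:R * (p - t) + s%:R * ((4 * t) ^+ 2 / 8 - 4 * t * p) = - (2 * s%:R * t ^+ 2).
  by field.
by [].
Qed.
End Calc.


Theorem lemma12 (R : realType) (T : finType) (e : rel T) (w : T -> R)
  (delta : R) (s : nat) :
  simple_graph e -> connected_graph e ->
  (forall x, 0 < w x) ->
  0 < delta ->
  s%:R = 8 * ln (#|T|%:R) / delta ^+ 2 ->
  forall v : T,
    sample_prob w (fun m : {ffun 'I_s -> T} =>
      Lambda e w v / (\sum_(x : T) w x)
        <= (LambdaStar e m v)%:R / s%:R + delta / 2)
    >= 1 - (#|T|%:R ^+ 3)^-1.
Proof.
move=> _ _ wpos d0 hs v.
have n1 : (1 <= #|T|)%N by apply/card_gt0P; exists v.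
have n1R : (1 : R) <= #|T|%:R by rewrite ler1n.
set W := \sum_x w x.
have W0 : 0 < W.
  rewrite /W (bigD1 v) //=.
  have := wpos v.
  have : 0 <= \sum_(x | x != v) w x by apply: sumr_ge0 => x _; apply/ltW/wpos.
  lra.
set P := (fun m : {ffun 'I_s -> T} => _).
rewrite /sample_prob /= -/W.
pose F := fun m : {ffun 'I_s -> T} => \prod_(i < s) (w (m i) / W).
have F0 m : 0 <= F m.
  by apply: prodr_ge0 => i _; apply: divr_ge0; [apply/ltW/wpos | apply/ltW].
have tot : \sum_m F m = 1.
  rewrite /F -(bigA_distr_bigA (fun (i : 'I_s) (x : T) => w x / W)) /=.
  rewrite prodr_const -mulr_suml -/W divff ?expr1n //; lra.
have split : \sum_(m | `[< P m >]) F m = 1 - \sum_(m | ~~ `[< P m >]) F m.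
  by rewrite -tot (bigID (fun m => `[< P m >]) predT) /=; ring.
have hP : 0 <= \sum_(m | `[< P m >]) F m by apply: sumr_ge0.
rewrite -/F split.
have n3 : 0 <= (#|T|%:R ^+ 3 : R)^-1 by rewrite invr_ge0 exprn_ge0 //; lra.
case: (posnP s) => [s0 | spos].
  have ln0 : ln (#|T|%:R : R) = 0.
    have d2 : delta ^+ 2 != 0 by rewrite expf_neq0 // gt_eqF.
    move: hs; rewrite s0 => /esym /eqP; rewrite mulf_eq0 invr_eq0 (negbTE d2) orbF mulf_eq0.
    by case/orP => /eqP // H; lra.
  have : (#|T|%:R : R) == 1 by rewrite -ln_eq0 ?ln0 //; lra.
  move/eqP => ->; rewrite expr1n invr1 subrr.
  lra.
have sR : (0 : R) < s%:R by rewrite ltr0n.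
have [L0 | [u [evu Lu]]] : Lambda e w v = 0 \/ exists u, e v u /\ Lambda e w v = weightN e w v u.
  rewrite /Lambda; apply: (big_ind (fun y => y = 0 \/ exists u, e v u /\ y = weightN e w v u)).
  - by left.
  - by move=> x y Hx Hy; rewrite /Order.max; case: ifP.
  - by move=> u evu; right; exists u.
  have -> : \sum_(m | ~~ `[< P m >]) F m = 0.
    apply: big1 => m /asboolPn; case; rewrite /P L0 mul0r.
    apply: addr_ge0; first by apply: divr_ge0; rewrite ler0n.
    lra.
  lra.
set t := delta / 2.
have t0 : 0 < t by rewrite /t; lra.
have ch := @chernoff R T w (inN e v u) s t v wpos t0.
rewrite -/W in ch.
have sub : \sum_(m | ~~ `[< P m >]) F m <=
  \sum_(m : {ffun 'I_s -> T} | (#|[set i | inN e v u (m i)]|%:R <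
       s%:R * ((\sum_(x | inN e v u x) w x) / W - t))) F m.
  rewrite big_mkcond [X in _ <= X]big_mkcond /=; apply: ler_sum => m _.
  case: ifP => H; last by case: ifP.
  rewrite ifT //.
  move/asboolPn: H; rewrite /P Lu => /negP; rewrite -ltNge => H.
  have cle : (countN e m v u <= LambdaStar e m v)%N by apply: leq_bigmax_cond.
  have cleR : ((countN e m v u)%:R : R) <= (LambdaStar e m v)%:R by rewrite ler_nat.
  rewrite /countN in cleR.
  set X := (#|_|%:R : R) in cleR *.
  set LS := ((LambdaStar e m v)%:R : R) in H cleR.
  have : X / s%:R < weightN e w v u / W - t.
    have : X / s%:R <= LS / s%:R by rewrite ler_pM2r // invr_gt0.
    rewrite /t; lra.
  rewrite ltr_pdivrMr // => H2.
  rewrite /weightN in H2. nra.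
have fin : expR (- (2 * s%:R * t ^+ 2)) <= (#|T|%:R ^+ 3 : R)^-1.
  have sd : s%:R * delta ^+ 2 = 8 * ln (#|T|%:R : R).
    rewrite hs; field; rewrite gt_eqF //.
  have -> : - (2 * s%:R * t ^+ 2) = - (4%:R * ln (#|T|%:R : R)).
    rewrite /t -[4%:R]/(4 : R). 
    have -> : 2 * s%:R * (delta / 2) ^+ 2 = (s%:R * delta ^+ 2) / 2 by field.
    by rewrite sd; field.
  rewrite expRN expRM_natl lnK ?posrE; last by lra.
  rewrite lef_pV2 ?posrE ?exprn_gt0 //; try lra.
  rewrite exprSr.
  have := @exprn_ge0 R (#|T|%:R) 3 ltac:(lra).
  nra.
lra.
Qed.
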